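(* Let $\mathbf{X}\subseteq\mathbb{N}^n$ be hybridlinear. The following are equivalent: (1) $\mathbf{X}$ is directed hybridlinear; (2) there is a representation $\mathbf{X}=\{\mathbf{b}_1,\dots,\mathbf{b}_r\}+\mathbb{N}(\mathbf{F})$ with $(\mathbf{b}_i+\mathbb{N}(\mathbf{F}))\cap(\mathbf{b}_j+\mathbb{N}(\mathbf{F}))\neq\emptyset$ for all $1\le i,j\le r$; (3) there is a representation $\mathbf{X}=\{\mathbf{b}_1,\dots,\mathbf{b}_r\}+\mathbb{N}(\mathbf{F})$ with $\mathbf{b}_i-\mathbf{b}_j\in\mathbb{Z}(\mathbf{F})$ for all $1\le i,j\le r$.
   Context: Hybridlinear: $\mathbf{B}+\mathbb{N}(\mathbf{F})$ with $\mathbf{B},\mathbf{F}\subseteq\mathbb{N}^n$ finite; $\mathbb{Z}(\mathbf{F})$ is the set of integer linear combinations of $\mathbf{F}$. Preservants: $\mathbf{P}_{\mathbf{X}}=\{\mathbf{p}\in\mathbb{Z}^n\mid\mathbf{X}+\mathbf{p}\subseteq\mathbf{X}\}$; $\mathbf{x}\le_{\mathbf{P}}\mathbf{y}$ iff $\mathbf{y}-\mathbf{x}\in\mathbf{P}$. A well-quasi-order $(\mathbf{X},\le)$ is directed if any two elements have a common upper bound in $\mathbf{X}$. $\mathbf{X}$ is directed hybridlinear if $(\mathbf{X},\le_{\mathbf{P}_{\mathbf{X}}})$ is a directed well-quasi-order (well-founded, every subset has finitely many minimal elements). *)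

(* Defs.v *)
(* Vectors of Z^n are row vectors 'rV[int]_n; N^n is the
   subset of vectors with nonnegative entries. Subsets are Prop predicates. *)
From mathcomp Require Import all_boot all_order all_algebra.
Set Implicit Arguments. Unset Strict Implicit. Unset Printing Implicit Defensive.
Import Order.TTheory GRing.Theory Num.Theory.
Local Open Scope ring_scope.

Definition vec (n : nat) := 'rV[int]_n.

Definition natvec (n : nat) (x : vec n) : Prop := forall i, 0 <= x 0 i.

Definition NF (n : nat) (F : seq (vec n)) (x : vec n) : Prop :=
  exists c : 'I_(size F) -> nat, x = \sum_(i < size F) (F`_i) *+ c i.

Definition ZF (n : nat) (F : seq (vec n)) (x : vec n) : Prop :=
  exists c : 'I_(size F) -> int, x = \sum_(i < size F) (F`_i) *~ c i.

Definition coset (n : nat) (b : vec n) (F : seq (vec n)) (x : vec n) : Prop :=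
  exists y, NF F y /\ x = b + y.

Definition represents (n : nat) (X : vec n -> Prop) (B F : seq (vec n)) : Prop :=
  (forall b, b \in B -> natvec b) /\ (forall f, f \in F -> natvec f) /\
  (forall x, X x <-> exists2 b, b \in B & coset b F x).

Definition hybridlinear (n : nat) (X : vec n -> Prop) : Prop :=
  exists B F, represents X B F.

Definition preservants (n : nat) (X : vec n -> Prop) (p : vec n) : Prop :=
  forall x, X x -> X (x + p).

Definition leP (n : nat) (P : vec n -> Prop) (x y : vec n) : Prop := P (y - x).

Definition ltP (n : nat) (P : vec n -> Prop) (x y : vec n) : Prop :=
  leP P x y /\ ~ leP P y x.

Definition well_founded_on (n : nat) (X : vec n -> Prop)
    (le : vec n -> vec n -> Prop) : Prop :=
  ~ exists u : nat -> vec n,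
      forall k, X (u k) /\ (le (u k.+1) (u k) /\ ~ le (u k) (u k.+1)).

Definition minimal_in (n : nat) (S : vec n -> Prop)
    (le : vec n -> vec n -> Prop) (x : vec n) : Prop :=
  S x /\ forall y, S y -> le y x -> le x y.

Definition finitely_many_minimal (n : nat) (X : vec n -> Prop)
    (le : vec n -> vec n -> Prop) : Prop :=
  forall S : vec n -> Prop, (forall x, S x -> X x) ->
    exists m : seq (vec n), forall x, minimal_in S le x -> x \in m.

Definition wqo_on (n : nat) (X : vec n -> Prop)
    (le : vec n -> vec n -> Prop) : Prop :=
  well_founded_on X le /\ finitely_many_minimal X le.

Definition directed_on (n : nat) (X : vec n -> Prop)
    (le : vec n -> vec n -> Prop) : Prop :=
  forall x y, X x -> X y -> exists z, X z /\ le x z /\ le y z.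

Definition directed_hybridlinear (n : nat) (X : vec n -> Prop) : Prop :=
  hybridlinear X /\
  wqo_on X (leP (preservants X)) /\ directed_on X (leP (preservants X)).

(* Main.v *)
Require Import Defs.
From mathcomp Require Import all_boot all_order all_algebra zify.
From Stdlib Require Import Classical ClassicalEpsilon.
Import Order.TTheory GRing.Theory Num.Theory.
Local Open Scope ring_scope.
Set Implicit Arguments. Unset Strict Implicit.

Lemma NF_natE n (S : seq (vec n)) x :
  NF S x <-> exists c : nat -> nat, x = \sum_(0 <= i < size S) S`_i *+ c i.
Proof.
split.
- case=> c ->. exists (fun i => odflt 0%N (omap c (insub i))).
  rewrite big_mkord; apply: eq_bigr => i _; by rewrite valK.
- case=> c ->. exists (fun i => c (val i)); by rewrite big_mkord.
Qed.

Lemma NF0 n (S : seq (vec n)) : NF S 0.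
Proof. exists (fun _ => 0%N); by rewrite big1 // => i _; rewrite mulr0n. Qed.

Lemma NFD n (S : seq (vec n)) x y : NF S x -> NF S y -> NF S (x + y).
Proof.
case=> c -> [d ->]; exists (fun i => (c i + d i)%N).
by rewrite -big_split; apply: eq_bigr => i _; rewrite mulrnDr.
Qed.

Lemma NF_cat n (F G : seq (vec n)) x : NF F x -> NF (F ++ G) x.
Proof.
move/NF_natE=> [c ->]; apply/NF_natE.
exists (fun i => if (i < size F)%N then c i else 0%N).
rewrite size_cat [RHS](@big_cat_nat _ _ _ (size F)) ?leq_addr //=.
rewrite [X in _ + X]big1_seq ?addr0; last first.
  move=> i /andP[_]; rewrite mem_index_iota => /andP[h _].
  by rewrite ifN ?mulr0n // -leqNgt.
apply: eq_big_nat => i /andP[_ h]; by rewrite nth_cat h.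
Qed.

Lemma ZF_mem n (S : seq (vec n)) s : s \in S -> ZF S s.
Proof.
move=> sS; have hi : (index s S < size S)%N by rewrite index_mem.
exists (fun i => if val i == index s S then 1 else 0).
rewrite (bigD1 (Ordinal hi)) //= eqxx nth_index // big1 ?addr0 //.
by move=> i /eqP hne; case: eqP => // h; case: hne; apply: val_inj.
Qed.

Lemma ZFB n (S : seq (vec n)) x y : ZF S x -> ZF S y -> ZF S (x - y).
Proof.
case=> c -> [d ->]; exists (fun i => c i - d i).
by rewrite -sumrB; apply: eq_bigr => i _; rewrite mulrzBr.
Qed.

Lemma NF_ZF n (S : seq (vec n)) x : NF S x -> ZF S x.
Proof. by case=> c ->; exists (fun i => (c i)%:Z). Qed.

Section Rep.
Variables (n : nat) (X : vec n -> Prop) (B F : seq (vec n)).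
Hypothesis hR : represents X B F.
Local Notation P := (preservants X).

Lemma F_natvec_nth (j : 'I_(size F)) : natvec F`_j.
Proof. by case: hR => _ [hF _]; apply: hF; apply: mem_nth. Qed.

Lemma natvecD (x y : vec n) : natvec x -> natvec y -> natvec (x + y).
Proof. by move=> hx hy i; rewrite mxE addr_ge0. Qed.

Lemma NF_natvec y : NF F y -> natvec y.
Proof.
case=> c -> i; rewrite summxE; apply: sumr_ge0 => j _.
by rewrite mulmxnE mulrn_wge0 // F_natvec_nth.
Qed.

Lemma X_natvec x : X x -> natvec x.
Proof.
case: hR => hB [_ hX] /hX [b bB [y [hy ->]]].
by apply: natvecD; [apply: hB | apply: NF_natvec].
Qed.

Lemma X_coset x : X x <-> exists2 b, b \in B & coset b F x.
Proof. by case: hR => _ [_ ->]. Qed.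

Lemma NF_pres y : NF F y -> P y.
Proof.
move=> hy x /X_coset [b bB [z [hz ->]]]; apply/X_coset; exists b => //.
by exists (z + y); split; [apply: NFD | rewrite addrA].
Qed.

Lemma pres0 : P 0.
Proof. by move=> x; rewrite addr0. Qed.

Lemma presD p q : P p -> P q -> P (p + q).
Proof. by move=> hp hq x hx; rewrite addrA; apply: hq; apply: hp. Qed.

Lemma pres_natvec x0 p : X x0 -> P p -> natvec p.
Proof.
move=> hx0 hp i.
have hk : forall k, X (x0 + p *+ k).
  elim=> [|k IH]; first by rewrite mulr0n addr0.
  by rewrite mulrSr addrA; apply: hp.
have h : forall k : nat, 0 <= x0 0 i + p 0 i *+ k.
  by move=> k; have := X_natvec (hk k) i; rewrite mxE mulmxnE.
rewrite leNgt; apply/negP => hb.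
have := h (absz (x0 0 i)).+1; rewrite -mulr_natr; nia.
Qed.

Lemma pres_antisym x0 p : X x0 -> P p -> P (- p) -> p = 0.
Proof.
move=> hx0 hp hn; have h1 := pres_natvec hx0 hp; have h2 := pres_natvec hx0 hn.
apply/matrixP => i j; rewrite (ord1 i) mxE; apply/eqP; rewrite eq_le h1 andbT.
by have := h2 j; rewrite mxE oppr_ge0.
Qed.

End Rep.

Lemma ZF_coset n (F : seq (vec n)) bi bj : ZF F (bi - bj) ->
  exists x, coset bi F x /\ coset bj F x.
Proof.
case=> z hz.
pose cp i := match z i with Posz m => m | Negz _ => 0%N end.
pose cn i := match z i with Posz _ => 0%N | Negz m => m.+1 end.
have hsplit : \sum_(i < size F) F`_i *~ z i =
   \sum_(i < size F) F`_i *+ cp i - \sum_(i < size F) F`_i *+ cn i.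
  rewrite -sumrB; apply: eq_bigr => i _; rewrite /cp /cn.
  by case: (z i) => m /=; rewrite ?mulr0n ?subr0 ?sub0r.
exists (bi + \sum_(i < size F) F`_i *+ cn i); split.
  by exists (\sum_(i < size F) F`_i *+ cn i); split => //; exists cn.
exists (\sum_(i < size F) F`_i *+ cp i); split; first by exists cp.
have e : \sum_(i < size F) F`_i *+ cp i =
    (bi - bj) + \sum_(i < size F) F`_i *+ cn i by rewrite hz hsplit subrK.
by rewrite e addrA [bj + _]addrC subrK.
Qed.

Lemma coset_ZF n (F : seq (vec n)) bi bj x : coset bi F x -> coset bj F x ->
  ZF F (bi - bj).
Proof.
case=> y1 [h1 e1] [y2 [h2 e2]].
have -> : bi - bj = y2 - y1.
  by apply/eqP; rewrite subr_eq addrAC (addrC y2) -e2 e1 addrK.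
by apply: ZFB; apply: NF_ZF.
Qed.

Lemma ex_min_from (v : nat -> nat) a :
  exists m, (a <= m)%N /\ forall j, (a <= j)%N -> (v m <= v j)%N.
Proof.
suff H : forall t, (exists j, (a <= j)%N /\ (v j <= t)%N) ->
  exists m, (a <= m)%N /\ forall j, (a <= j)%N -> (v m <= v j)%N.
  by apply: (H (v a)); exists a.
elim=> [|t IH] [j [hj hv]].
  by exists j; split => // k _; move: hv; rewrite leqn0 => /eqP ->.
case: (classic (exists j, (a <= j)%N /\ (v j <= t)%N)) => [h|h]; first exact: IH.
exists j; split => // k hk; case: (leqP (v j) (v k)) => // hlt.
by exfalso; apply: h; exists k; split => //; rewrite -ltnS (leq_trans hlt hv).
Qed.

Lemma sub_nat (v : nat -> nat) : exists phi : nat -> nat,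
  (forall k, (phi k < phi k.+1)%N) /\ forall k, (v (phi k) <= v (phi k.+1))%N.
Proof.
pose mf a := proj1_sig (constructive_indefinite_description _ (ex_min_from v a)).
have mfP a : (a <= mf a)%N /\ forall j, (a <= j)%N -> (v (mf a) <= v j)%N.
  exact: (proj2_sig (constructive_indefinite_description _ (ex_min_from v a))).
pose phi := fix f k := match k with 0 => mf 0%N | k'.+1 => mf (f k').+1 end.
have hinc k : (phi k < phi k.+1)%N by rewrite /= (proj1 (mfP _)).
exists phi; split => // [[|k]].
  by apply: (proj2 (mfP 0%N)).
by apply: (proj2 (mfP _)); apply: leq_trans (hinc k) (ltnW (hinc k.+1)).
Qed.

Lemma dickson (m : nat) (u : nat -> nat -> nat) : exists phi : nat -> nat,
  (forall k, (phi k < phi k.+1)%N) /\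
  forall k j, (j < m)%N -> (u (phi k) j <= u (phi k.+1) j)%N.
Proof.
elim: m => [|m [phi [hinc hmon]]]; first by exists id; split.
have [psi [pinc pmon]] := sub_nat (fun k => u (phi k) m).
have phimono : {homo phi : i j / (i < j)%N >-> (i < j)%N}.
  by apply: homo_ltn => //; apply: ltn_trans.
exists (fun k => phi (psi k)); split; first by move=> k; apply: phimono.
move=> k j; rewrite ltnS leq_eqVlt => /orP[/eqP ->|hj]; first exact: pmon.
have hm := @homo_leq _ (fun k => u (phi k) j) leq (@leqnn) (fun a b c => @leq_trans a b c)
  (fun i => hmon i j hj).
by apply: hm; apply: ltnW.
Qed.

Lemma NF_mem n (S : seq (vec n)) s : s \in S -> NF S s.
Proof.
move=> sS; have hi : (index s S < size S)%N by rewrite index_mem.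
exists (fun i => if val i == index s S then 1%N else 0%N).
rewrite (bigD1 (Ordinal hi)) //= eqxx nth_index // big1 ?addr0 //.
by move=> i /eqP hne; case: eqP => // h; case: hne; apply: val_inj.
Qed.

Lemma pres_NF n (X : vec n -> Prop) (S : seq (vec n)) y :
  (forall s, s \in S -> preservants X s) -> NF S y -> preservants X y.
Proof.
move=> hS [c ->]; apply: (big_ind (preservants X)).
- by move=> x; rewrite addr0.
- by move=> p q hp hq x hx; rewrite addrA; apply: hq; apply: hp.
move=> i _; elim: (c i) => [|k IH]; first by move=> x; rewrite mulr0n addr0.
rewrite mulrSr => x hx; rewrite addrA; apply: (hS _ (mem_nth _ (ltn_ord i))).
exact: IH.
Qed.

Lemma upper_bound n (X : vec n -> Prop) x0 : X x0 ->
  directed_on X (Defs.leP (preservants X)) -> forall L : seq (vec n),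
  (forall b, b \in L -> X b) ->
  exists z, X z /\ forall b, b \in L -> preservants X (z - b).
Proof.
move=> hx0 hdir; elim=> [|a L IH] hL; first by exists x0.
have [z [hz hzL]] : exists z, X z /\ forall b, b \in L -> preservants X (z - b).
  by apply: IH => b hb; apply: hL; rewrite inE hb orbT.
have [w [hw [hwa hwz]]] := hdir a z (hL a (mem_head _ _)) hz.
exists w; split => // b; rewrite inE => /orP[/eqP ->//|hb].
have -> : w - b = (w - z) + (z - b) by rewrite addrA subrK.
move=> x hx; rewrite addrA; apply: (hzL b hb); exact: hwz.
Qed.

Lemma directed_R3 n (X : vec n -> Prop) B F : represents X B F ->
  directed_on X (Defs.leP (preservants X)) ->
  exists B F, represents X B F /\
    (forall bi bj, bi \in B -> bj \in B -> ZF F (bi - bj)).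
Proof.
move=> hR hdir; case: B hR => [|b0 B0] hR.
  by exists [::], F; split.
set B := b0 :: B0 in hR *.
have XB b : b \in B -> X b.
  move=> hb; apply/(X_coset hR); exists b => //; exists 0; split; last by rewrite addr0.
  exact: NF0.
have hx0 := XB b0 (mem_head _ _).
have [z [hz hzB]] := upper_bound hx0 hdir XB.
pose G := [seq z - b | b <- B].
have hFP f : f \in F -> preservants X f by move=> hf; apply: (NF_pres hR); apply: NF_mem.
have hGP g : g \in G -> preservants X g by move=> /mapP [b hb ->]; apply: hzB.
have hFGP s : s \in F ++ G -> preservants X s.
  by rewrite mem_cat => /orP[/hFP|/hGP].
exists B, (F ++ G); split; last first.
  move=> bi bj hi hj.
  have -> : bi - bj = (z - bj) - (z - bi) by rewrite opprB [RHS]addrC addrA subrK.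
  by apply: ZFB; apply: ZF_mem; rewrite mem_cat; apply/orP; right; apply: (map_f (fun b => z - b)).
case: (hR) => hB [hF hX]; split => //; split.
  move=> f; rewrite mem_cat => /orP[h|h]; first exact: hF.
  by apply: (pres_natvec hR hx0); apply: hGP.
move=> x; split.
  move/hX => [b hb [y [hy ->]]]; exists b => //; exists y; split => //.
  exact: NF_cat.
move=> [b hb [y [hy ->]]].
by apply: (pres_NF hFGP hy); apply: XB.
Qed.

Section R3D.
Variables (n : nat) (X : vec n -> Prop) (B F : seq (vec n)).
Hypothesis hR : represents X B F.
Local Notation P := (preservants X).
Local Notation le := (Defs.leP (preservants X)).

Lemma R3_directed :
  (forall bi bj, bi \in B -> bj \in B -> ZF F (bi - bj)) -> directed_on X le.
Proof.
move=> hZ x y /(X_coset hR) [bi hbi [u [hu ex]]] /(X_coset hR) [bj hbj [v [hv ey]]].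
have [w [[a [ha ew1]] [c [hc ew2]]]] := ZF_coset (hZ bi bj hbi hbj).
exists (w + u + v); split.
  apply/(X_coset hR); exists bi => //; exists (a + u + v); split.
    by apply: NFD => //; apply: NFD.
  by rewrite ew1 !addrA.
split; rewrite /Defs.leP.
  have -> : w + u + v - x = a + v.
    by apply/matrixP => i j; rewrite ex ew1 !mxE; lia.
  by apply: (NF_pres hR); apply: NFD.
have -> : w + u + v - y = c + u.
  by apply/matrixP => i j; rewrite ey ew2 !mxE; lia.
by apply: (NF_pres hR); apply: NFD.
Qed.

Lemma R3_wf : well_founded_on X le.
Proof.
move=> [u hu].
have hx0 := proj1 (hu 0%N).
have hnv k : natvec (u k - u k.+1) := pres_natvec hR hx0 (proj1 (proj2 (hu k))).
have hne k : u k - u k.+1 != 0.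
  apply/eqP => h0; apply: (proj2 (proj2 (hu k))).
  by rewrite /Defs.leP -opprB h0 oppr0; exact: pres0.
pose s k := \sum_(j < n) u k 0 j.
have hs k : s k.+1 < s k.
  have hpos : 0 < \sum_(j < n) (u k - u k.+1) 0 j.
    have hge : 0 <= \sum_(j < n) (u k - u k.+1) 0 j by apply: sumr_ge0 => j _; apply: hnv.
    rewrite lt_def hge andbT; apply/negP; rewrite psumr_eq0; last by move=> j _; apply: hnv.
    move/allP => hall; move/negP: (hne k); apply; apply/eqP/matrixP => i j.
    have := hall j (mem_index_enum _); rewrite implyTb => /eqP h.
    by rewrite (ord1 i) h mxE.
  by move: hpos; rewrite /s; under eq_bigr do rewrite !mxE; rewrite sumrB subr_gt0.
have hs0 k : 0 <= s k.
  by apply: sumr_ge0 => j _; apply: (X_natvec hR (proj1 (hu k))).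
have hind : forall k : nat, s k + k%:Z <= s 0%N.
  elim=> [|k IH]; first by rewrite addr0.
  have := hs k; have := hs0 k.+1; move: IH; lia.
have := hind (absz (s 0%N)).+1; have := hs0 (absz (s 0%N)).+1; lia.
Qed.

Lemma R3_fmm : finitely_many_minimal X le.
Proof.
move=> S hS.
case: (classic (exists m : seq (vec n), forall x, minimal_in S le x -> x \in m)) => // hno.
exfalso.
have hg : forall s : seq (vec n), exists x, minimal_in S le x /\ x \notin s.
  move=> s; apply: NNPP => h; apply: hno; exists s => x hx; apply: NNPP => hn.
  by apply: h; exists x; split => //; apply/negP.
pose g s := proj1_sig (constructive_indefinite_description _ (hg s)).
have gP s : minimal_in S le (g s) /\ g s \notin s.
  exact: (proj2_sig (constructive_indefinite_description _ (hg s))).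
pose L := fix L k := match k with 0 => [::] | k'.+1 => g (L k') :: L k' end.
pose x k := g (L k).
have hxL k1 k2 : (k1 < k2)%N -> x k1 \in L k2.
  elim: k2 => // k2 IH; rewrite ltnS leq_eqVlt => /orP[/eqP ->|h].
    by rewrite /= inE eqxx.
  by rewrite /= inE IH ?orbT.
have hx0 : X (g [::]) := hS _ (proj1 (proj1 (gP [::]))).
have hdec : forall k, exists q : nat * (nat -> nat), (q.1 < size B)%N /\
    x k = B`_(q.1) + \sum_(0 <= j < size F) F`_j *+ q.2 j.
  move=> k; have hX : X (x k) := hS _ (proj1 (proj1 (gP (L k)))).
  move/(X_coset hR): hX => [b hb [y [hy ->]]]; move/NF_natE: hy => [c ->].
  by exists (index b B, c); rewrite /= index_mem nth_index.
pose q k := proj1_sig (constructive_indefinite_description _ (hdec k)).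
have qP k : ((q k).1 < size B)%N /\
    x k = B`_((q k).1) + \sum_(0 <= j < size F) F`_j *+ (q k).2 j.
  exact: (proj2_sig (constructive_indefinite_description _ (hdec k))).
pose uu k j := if (j < size F)%N then (q k).2 j
  else if j == size F then (q k).1 else (size B - (q k).1)%N.
have [phi [hinc hmon]] := dickson (size F).+2 uu.
have hk12 : (phi 0%N < phi 1%N)%N := hinc 0%N.
have e1 : (q (phi 0%N)).1 = (q (phi 1%N)).1.
  have := hmon 0%N (size F) ltac:(lia); rewrite /uu ltnn eqxx.
  have := hmon 0%N (size F).+1 ltac:(lia); rewrite /uu ltnNge leqnSn /= eqn_leq ltnn /=.
  have := proj1 (qP (phi 0%N)); have := proj1 (qP (phi 1%N)); lia.
have ec j : (j < size F)%N -> ((q (phi 0%N)).2 j <= (q (phi 1%N)).2 j)%N.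
  by move=> hj; have := hmon 0%N j ltac:(lia); rewrite /uu hj.
have hdiff : x (phi 1%N) = x (phi 0%N) +
    \sum_(0 <= j < size F) F`_j *+ ((q (phi 1%N)).2 j - (q (phi 0%N)).2 j).
  rewrite [LHS](proj2 (qP (phi 1%N))) (proj2 (qP (phi 0%N))) e1 -addrA -big_split /=.
  congr (_ + _); apply: eq_big_nat => j /andP[_ hj].
  by rewrite -mulrnDr subnKC // ec.
have hle : le (x (phi 0%N)) (x (phi 1%N)).
  rewrite /Defs.leP hdiff addrC addKr; apply: (NF_pres hR); apply/NF_natE.
  by eexists.
have hmin2 := proj1 (gP (L (phi 1%N))).
have hle' := (proj2 hmin2) (x (phi 0%N)) (proj1 (proj1 (gP (L (phi 0%N))))) hle.
have heq : x (phi 1%N) - x (phi 0%N) = 0.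
  by apply: (pres_antisym hR hx0 hle); rewrite opprB.
move/eqP: heq; rewrite subr_eq0 => /eqP heq.
have := proj2 (gP (L (phi 1%N))); rewrite -/(x (phi 1%N)) heq hxL //.
Qed.

End R3D.

Theorem mainTheorem15 (n : nat) (X : vec n -> Prop) :
  hybridlinear X ->
  [/\ (directed_hybridlinear X <->
        exists B F, represents X B F /\
          (forall bi bj, bi \in B -> bj \in B ->
             exists x, coset bi F x /\ coset bj F x)),
      (directed_hybridlinear X <->
        exists B F, represents X B F /\
          (forall bi bj, bi \in B -> bj \in B -> ZF F (bi - bj))) &
      ((exists B F, represents X B F /\
          (forall bi bj, bi \in B -> bj \in B ->
             exists x, coset bi F x /\ coset bj F x)) <->
       (exists B F, represents X B F /\
          (forall bi bj, bi \in B -> bj \in B -> ZF F (bi - bj))))].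
Proof.
move=> hH.
have R23 : (exists B F, represents X B F /\
          (forall bi bj, bi \in B -> bj \in B ->
             exists x, coset bi F x /\ coset bj F x)) ->
       (exists B F, represents X B F /\
          (forall bi bj, bi \in B -> bj \in B -> ZF F (bi - bj))).
  case=> B [F [hR h]]; exists B, F; split => // bi bj hi hj.
  by have [x [h1 h2]] := h bi bj hi hj; exact: coset_ZF h1 h2.
have R32 : (exists B F, represents X B F /\
          (forall bi bj, bi \in B -> bj \in B -> ZF F (bi - bj))) ->
       (exists B F, represents X B F /\
          (forall bi bj, bi \in B -> bj \in B ->
             exists x, coset bi F x /\ coset bj F x)).
  case=> B [F [hR h]]; exists B, F; split => // bi bj hi hj.
  exact: ZF_coset (h bi bj hi hj).
have D3 : directed_hybridlinear X -> (exists B F, represents X B F /\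
          (forall bi bj, bi \in B -> bj \in B -> ZF F (bi - bj))).
  by case=> [[B [F hR]] [_ hdir]]; exact: directed_R3 hR hdir.
have R3D : (exists B F, represents X B F /\
          (forall bi bj, bi \in B -> bj \in B -> ZF F (bi - bj))) ->
    directed_hybridlinear X.
  case=> B [F [hR hZ]]; split; first by exists B, F.
  split; first by split; [exact: R3_wf hR | exact: R3_fmm hR].
  exact: R3_directed hR hZ.
split; split => h.
- by apply: R32; apply: D3.
- by apply: R3D; apply: R23.
- by apply: D3.
- by apply: R3D.
- by apply: R23.
- by apply: R32.
Qed.
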